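(* Let $p_0,p_1,\dots$ be a special sequence in $C([-1,1])$ and for $i\ge1$ let $g_i(t)=\int_0^t[1+p_i(s)]\,ds$ for $t\in[-1,1]$. If $R$ is a tournament on $[n]$ and $\varepsilon>0$, then there exists $(f_1,\dots,f_n)\in\mathcal G_0^n$ such that (1) $\|f_i-g_i\|<\varepsilon$ (sup norm) for $i\in[n]$; (2) for $i\in[n]$ and $t\in[-1,1]$, $1/3<f_i'(t)<3$; (3) for distinct $i,j\in[n]$, $f_j\circ f_i^{-1}\in\mathcal G_+$ if and only if $(i,j)\in R$.
   Context: $\mathcal G$ is the group of strictly increasing continuous maps $f:[-1,1]\to[-1,1]$ with $f(\pm1)=\pm1$; $\mathcal G_0=\{f\in\mathcal G:\int_{-1}^1f=0\}$, $\mathcal G_+=\{f\in\mathcal G:\int_{-1}^1f>0\}$. A tournament on $[n]$ is $R\subset[n]\times[n]$ with no diagonal pairs and exactly one of $(i,j),(j,i)$ for each distinct $i,j$. A special sequence is a sequence $p_0,p_1,\dots$ of nonzero continuously differentiable functions on $[-1,1]$ such that: every $p_i$ is even and $p_0=1$; $\int_{-1}^1p_i(t)p_j(t)\,dt=0$ for $i\ne j$; $\sup_t|p_i(t)|\le\tfrac12$ for $i>0$; and $p_i(\pm1)=0$ for $i>0$. *)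

(* Defs.v *)
From Stdlib Require Import Reals Lra ClassicalEpsilon.
From Coquelicot Require Import Coquelicot.
Open Scope R_scope.

Definition I11 (x : R) : Prop := -1 <= x <= 1.

Definition cont_I (f : R -> R) (x : R) : Prop :=
  filterlim f (within I11 (locally x)) (locally (f x)).

Definition deriv_I (f : R -> R) (x l : R) : Prop :=
  filterlim (fun y => (f y - f x) / (y - x))
    (within (fun y => I11 y /\ y <> x) (locally x)) (locally l).

Definition C1_I (f : R -> R) : Prop :=
  exists df : R -> R,
    (forall x, I11 x -> deriv_I f x (df x)) /\ (forall x, I11 x -> cont_I df x).

Definition in_G (f : R -> R) : Prop :=
  (forall x, I11 x -> I11 (f x)) /\
  (forall x y, I11 x -> I11 y -> x < y -> f x < f y) /\
  (forall x, I11 x -> cont_I f x) /\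
  f (-1) = -1 /\ f 1 = 1.

Definition in_G0 (f : R -> R) : Prop := in_G f /\ RInt f (-1) 1 = 0.
Definition in_Gplus (f : R -> R) : Prop := in_G f /\ RInt f (-1) 1 > 0.

(* Inverse of f on [-1,1] (meaningful for f in G, where it is unique). *)
Definition inv_I (f : R -> R) (y : R) : R :=
  epsilon (inhabits 0) (fun x => I11 x /\ f x = y).

Definition special_seq (p : nat -> R -> R) : Prop :=
  (forall i, C1_I (p i)) /\
  (forall i, exists t, I11 t /\ p i t <> 0) /\
  (forall i t, I11 t -> p i (- t) = p i t) /\
  (forall t, I11 t -> p 0%nat t = 1) /\
  (forall i j, i <> j -> RInt (fun t => p i t * p j t) (-1) 1 = 0) /\
  (forall i, (0 < i)%nat -> exists M, M <= 1/2 /\ forall t, I11 t -> Rabs (p i t) <= M) /\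
  (forall i, (0 < i)%nat -> p i (-1) = 0 /\ p i 1 = 0).

Definition in_n (n i : nat) : Prop := (1 <= i <= n)%nat.

Definition tournament (n : nat) (Rel : nat -> nat -> Prop) : Prop :=
  (forall i j, Rel i j -> in_n n i /\ in_n n j) /\
  (forall i, ~ Rel i i) /\
  (forall i j, in_n n i -> in_n n j -> i <> j ->
     (Rel i j \/ Rel j i) /\ ~ (Rel i j /\ Rel j i)).

(* Main.v *)
Require Import Defs.
From Stdlib Require Import Reals Lra Lia ClassicalEpsilon.
From Coquelicot Require Import Coquelicot.
Open Scope R_scope.

Lemma continuous_ED (f : R -> R) x : continuous f x <->
  forall e, 0 < e -> exists d, 0 < d /\ forall y, Rabs (y - x) < d -> Rabs (f y - f x) < e.
Proof.
  split.
  - intros H e He. destruct (proj1 (filterlim_locally f (f x)) H (mkposreal e He)) as [d Hd].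
    exists d; split; [apply cond_pos|]. intros y Hy. apply (Hd y Hy).
  - intros H. apply filterlim_locally. intros eps.
    destruct (H eps (cond_pos eps)) as [d [Hd H']]. exists (mkposreal d Hd).
    intros y Hy. apply H'. exact Hy.
Qed.

Lemma cont_I_ED (f : R -> R) x : cont_I f x <->
  forall e, 0 < e -> exists d, 0 < d /\ forall y, I11 y -> Rabs (y - x) < d -> Rabs (f y - f x) < e.
Proof.
  unfold cont_I. split.
  - intros H e He. destruct (proj1 (filterlim_locally f (f x)) H (mkposreal e He)) as [d Hd].
    exists d; split; [apply cond_pos|]. intros y Iy Hy. apply (Hd y Hy Iy).
  - intros H. apply filterlim_locally. intros eps.
    destruct (H eps (cond_pos eps)) as [d [Hd H']]. exists (mkposreal d Hd).
    intros y Hy Iy. apply H'; [exact Iy| exact Hy].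
Qed.

Lemma deriv_I_ED (f : R -> R) x l : deriv_I f x l <->
  forall e, 0 < e -> exists d, 0 < d /\ forall y, I11 y -> y <> x -> Rabs (y - x) < d ->
     Rabs ((f y - f x) / (y - x) - l) < e.
Proof.
  unfold deriv_I. split.
  - intros H e He. destruct (proj1 (filterlim_locally _ l) H (mkposreal e He)) as [d Hd].
    exists d; split; [apply cond_pos|]. intros y Iy Ny Hy. apply (Hd y Hy (conj Iy Ny)).
  - intros H. apply filterlim_locally. intros eps.
    destruct (H eps (cond_pos eps)) as [d [Hd H']]. exists (mkposreal d Hd).
    intros y Hy [Iy Ny]. apply H'; [exact Iy| exact Ny | exact Hy].
Qed.

Lemma continuous_pt (f : R -> R) x : continuous f x -> continuity_pt f x.
Proof. intros H. apply continuity_pt_filterlim. exact H. Qed.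

Definition clamp (t : R) : R := Rmax (-1) (Rmin 1 t).

Lemma clamp_I t : I11 (clamp t).
Proof. unfold clamp, I11, Rmax, Rmin. repeat destruct Rle_dec; lra. Qed.
Lemma clamp_id t : I11 t -> clamp t = t.
Proof. unfold clamp, I11, Rmax, Rmin. intros. repeat destruct Rle_dec; lra. Qed.
Lemma clamp_opp t : clamp (- t) = - clamp t.
Proof. unfold clamp, Rmax, Rmin. repeat destruct Rle_dec; lra. Qed.
Lemma clamp_lip x y : Rabs (clamp y - clamp x) <= Rabs (y - x).
Proof. unfold clamp, Rmax, Rmin. repeat destruct Rle_dec; unfold Rabs; repeat destruct Rcase_abs; lra. Qed.

Lemma cont_clamp (u : R -> R) : (forall x, I11 x -> cont_I u x) ->
  forall x, continuous (fun t => u (clamp t)) x.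
Proof.
  intros H x. apply continuous_ED. intros e He.
  destruct (proj1 (cont_I_ED u (clamp x)) (H _ (clamp_I x)) e He) as [d [Hd H']].
  exists d; split; auto. intros y Hy. apply H'. apply clamp_I.
  eapply Rle_lt_trans. apply clamp_lip. exact Hy.
Qed.

Lemma deriv_cont (f : R -> R) x l : deriv_I f x l -> cont_I f x.
Proof.
  intros H. apply cont_I_ED. intros e He.
  destruct (proj1 (deriv_I_ED f x l) H 1 Rlt_0_1) as [d [Hd H']].
  exists (Rmin d (e / (Rabs l + 1))). split.
  { apply Rmin_pos; auto. apply Rdiv_lt_0_compat; auto. pose proof (Rabs_pos l); lra. }
  intros y Iy Hy. destruct (Req_dec y x) as [->|Ny].
  { replace (f x - f x) with 0 by ring. rewrite Rabs_R0; auto. }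
  assert (Hq := H' y Iy Ny (Rlt_le_trans _ _ _ Hy (Rmin_l _ _))).
  assert (Hyx : y - x <> 0) by lra.
  replace (f y - f x) with (((f y - f x) / (y - x)) * (y - x)) by (field; auto).
  rewrite Rabs_mult.
  assert (Rabs ((f y - f x) / (y - x)) <= Rabs l + 1).
  { replace ((f y - f x) / (y - x)) with (((f y - f x) / (y - x) - l) + l) by ring.
    eapply Rle_trans. apply Rabs_triang. lra. }
  assert (Rabs (y - x) < e / (Rabs l + 1)) by (eapply Rlt_le_trans; [exact Hy| apply Rmin_r]).
  pose proof (Rabs_pos l). pose proof (Rabs_pos (y - x)).
  apply Rle_lt_trans with ((Rabs l + 1) * Rabs (y - x)).
  { apply Rmult_le_compat_r; auto. }
  replace e with ((Rabs l + 1) * (e / (Rabs l + 1))) by (field; lra).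
  apply Rmult_lt_compat_l; lra.
Qed.
Lemma deriv_I_ext (u v : R -> R) x l : (forall y, I11 y -> u y = v y) -> I11 x ->
  deriv_I u x l -> deriv_I v x l.
Proof.
  intros E Ix H. apply deriv_I_ED. intros e He.
  destruct (proj1 (deriv_I_ED u x l) H e He) as [d [Hd H']].
  exists d; split; auto. intros y Iy Ny Hy. rewrite <- (E y Iy), <- (E x Ix). auto.
Qed.

Lemma deriv_I_plus (u v : R -> R) x a b : deriv_I u x a -> deriv_I v x b ->
  deriv_I (fun t => u t + v t) x (a + b).
Proof.
  intros Hu Hv. apply deriv_I_ED. intros e He.
  destruct (proj1 (deriv_I_ED u x a) Hu (e/2)) as [d1 [Hd1 H1]]; [lra|].
  destruct (proj1 (deriv_I_ED v x b) Hv (e/2)) as [d2 [Hd2 H2]]; [lra|].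
  exists (Rmin d1 d2); split; [apply Rmin_pos; auto|].
  intros y Iy Ny Hy.
  assert (A1 := H1 y Iy Ny (Rlt_le_trans _ _ _ Hy (Rmin_l _ _))).
  assert (A2 := H2 y Iy Ny (Rlt_le_trans _ _ _ Hy (Rmin_r _ _))).
  replace ((u y + v y - (u x + v x)) / (y - x) - (a + b)) with
    (((u y - u x) / (y - x) - a) + ((v y - v x) / (y - x) - b)) by (field; lra).
  eapply Rle_lt_trans. apply Rabs_triang. lra.
Qed.

Lemma deriv_I_scal (u : R -> R) x a c : deriv_I u x a ->
  deriv_I (fun t => c * u t) x (c * a).
Proof.
  intros Hu. apply deriv_I_ED. intros e He.
  assert (Hc : 0 < Rabs c + 1) by (pose proof (Rabs_pos c); lra).
  destruct (proj1 (deriv_I_ED u x a) Hu (e / (Rabs c + 1))) as [d1 [Hd1 H1]].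
  { apply Rdiv_lt_0_compat; auto. }
  exists d1; split; auto. intros y Iy Ny Hy.
  assert (A1 := H1 y Iy Ny Hy).
  replace ((c * u y - c * u x) / (y - x) - c * a) with (c * ((u y - u x) / (y - x) - a)) by (field; lra).
  rewrite Rabs_mult.
  pose proof (Rabs_pos c). pose proof (Rabs_pos ((u y - u x) / (y - x) - a)).
  apply Rle_lt_trans with ((Rabs c + 1) * Rabs ((u y - u x) / (y - x) - a)).
  { apply Rmult_le_compat_r; lra. }
  replace e with ((Rabs c + 1) * (e / (Rabs c + 1))) by (field; lra).
  apply Rmult_lt_compat_l; lra.
Qed.

Lemma deriv_I_zero x : deriv_I (fun _ => 0) x 0.
Proof.
  apply deriv_I_ED. intros e He. exists 1; split; [lra|]. intros y _ Ny _.
  replace ((0 - 0) / (y - x) - 0) with 0 by (field; lra). rewrite Rabs_R0; auto.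
Qed.

Lemma is_derive_deriv_I (f : R -> R) x l : is_derive f x l -> deriv_I f x l.
Proof.
  intros H. apply is_derive_Reals in H. apply deriv_I_ED. intros e He.
  destruct (H e He) as [d Hd]. exists d; split; [apply cond_pos|].
  intros y Iy Ny Hy. assert (Hh := Hd (y - x) ltac:(lra) Hy).
  replace (x + (y - x)) with y in Hh by ring. exact Hh.
Qed.

Lemma deriv_I_is_derive (f : R -> R) x l : -1 < x < 1 -> deriv_I f x l -> is_derive f x l.
Proof.
  intros Ix H. apply is_derive_Reals. intros e He.
  destruct (proj1 (deriv_I_ED f x l) H e He) as [d [Hd H']].
  assert (P : 0 < Rmin d (Rmin (1 - x) (x + 1))) by (repeat apply Rmin_pos; lra).
  exists (mkposreal _ P). intros h Nh Hh. simpl in Hh.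
  assert (h1 := Rlt_le_trans _ _ _ Hh (Rmin_l _ _)).
  assert (h2 := Rlt_le_trans _ _ _ Hh (Rmin_r _ _)).
  assert (h3 := Rlt_le_trans _ _ _ h2 (Rmin_l _ _)).
  assert (h4 := Rlt_le_trans _ _ _ h2 (Rmin_r _ _)).
  assert (Hy := H' (x + h)). replace (x + h - x) with h in Hy by ring.
  apply Hy; auto.
  - unfold I11. unfold Rabs in h3, h4. destruct Rcase_abs; lra.
  - lra.
Qed.
Ltac rring := match goal with |- @eq _ ?a ?b => change (@eq R a b); ring end.

Definition GC (f : R -> R) := forall x, continuous f x.

Lemma ex_RInt_c (f : R -> R) a b : GC f -> ex_RInt f a b.
Proof. intros H. apply (@ex_RInt_continuous R_CompleteNormedModule). intros; apply H. Qed.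

Lemma is_derive_RInt0 (f : R -> R) a x : GC f -> is_derive (fun t => RInt f a t) x (f x).
Proof.
  intros H. apply (is_derive_RInt f (fun t => RInt f a t) a x).
  - apply filter_forall. intros y. apply (@RInt_correct R_CompleteNormedModule). apply ex_RInt_c; auto.
  - apply H.
Qed.

Lemma GC_RInt0 (f : R -> R) a : GC f -> GC (fun t => RInt f a t).
Proof. intros H x. apply (@ex_derive_continuous R_AbsRing R_NormedModule). eexists. apply is_derive_RInt0; auto. Qed.

Lemma FTC (F f : R -> R) a b : a <= b -> (forall x, a <= x <= b -> continuous F x) ->
  (forall x, a < x < b -> is_derive F x (f x)) -> GC f -> RInt f a b = F b - F a.
Proof.
  intros Hab HF HD Hf.
  set (Psi := fun s => F s - RInt f a s).
  assert (M := MVT_gen Psi a b (fun _ => 0)). cbv zeta in M.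
  rewrite Rmin_left in M by auto. rewrite Rmax_right in M by auto.
  destruct M as [c [_ Hc]].
  - intros x Hx. unfold Psi.
    assert (D1 := is_derive_RInt0 f a x Hf).
    assert (D2 := is_derive_minus _ _ _ _ _ (HD x Hx) D1).
    replace 0 with (minus (f x) (f x)) by (unfold minus, plus, opp; simpl; ring).
    exact D2.
  - intros x Hx. unfold Psi. apply continuity_pt_minus.
    + apply continuous_pt. apply HF; auto.
    + apply continuous_pt. apply GC_RInt0; auto.
  - unfold Psi in Hc. rewrite RInt_point in Hc. unfold zero in Hc; simpl in Hc. lra.
Qed.

Lemma RInt_scalR (f : R -> R) a b c : ex_RInt f a b -> RInt (fun x => c * f x) a b = c * RInt f a b.
Proof. intros H. exact (@RInt_scal R_CompleteNormedModule f a b c H). Qed.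
Lemma RInt_plusR (f g : R -> R) a b : ex_RInt f a b -> ex_RInt g a b ->
  RInt (fun x => f x + g x) a b = RInt f a b + RInt g a b.
Proof. intros H1 H2. exact (@RInt_plus R_CompleteNormedModule f g a b H1 H2). Qed.

Lemma RInt_minusR (f g : R -> R) a b : ex_RInt f a b -> ex_RInt g a b ->
  RInt (fun x => f x - g x) a b = RInt f a b - RInt g a b.
Proof. intros H1 H2. exact (@RInt_minus R_CompleteNormedModule f g a b H1 H2). Qed.

Lemma scal_R (a b : R) : scal a b = a * b.
Proof. reflexivity. Qed.

Lemma RInt_odd (u : R -> R) : GC u -> (forall x, u (- x) = - u x) -> RInt u (-1) 1 = 0.
Proof.
  intros Hc Ho.
  assert (E := RInt_comp_lin u (-1) 0 (-1) 1 (ex_RInt_c _ _ _ Hc)).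
  rewrite (RInt_ext _ u) in E.
  2:{ intros x _. rewrite scal_R. replace (-1 * x + 0) with (- x) by ring. rewrite Ho. lra. }
  replace (-1 * -1 + 0) with 1 in E by ring. replace (-1 * 1 + 0) with (-1) in E by ring.
  rewrite <- (opp_RInt_swap u (-1) 1) in E by (apply ex_RInt_c; auto).
  unfold opp in E; simpl in E. lra.
Qed.

Lemma RInt0_odd (w : R -> R) : GC w -> (forall x, w (- x) = w x) ->
  forall t, RInt w 0 (- t) = - RInt w 0 t.
Proof.
  intros Hc He t.
  assert (E := RInt_comp_lin w (-1) 0 0 t (ex_RInt_c _ _ _ Hc)).
  rewrite (RInt_ext _ (fun y => -1 * (w y))) in E.
  2:{ intros x _. unfold scal; simpl; unfold mult; simpl. replace (-1 * x + 0) with (- x) by ring. rewrite He. lra. }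
  rewrite RInt_scalR in E by (apply ex_RInt_c; auto).
  replace (-1 * 0 + 0) with 0 in E by ring. replace (-1 * t + 0) with (- t) in E by ring.
  rewrite <- E. lra.
Qed.

Lemma RInt_chasles0 (w : R -> R) : GC w -> RInt w (-1) 1 = RInt w 0 1 - RInt w 0 (-1).
Proof.
  intros Hc. rewrite <- (RInt_Chasles w (-1) 0 1) by (apply ex_RInt_c; auto).
  rewrite <- (opp_RInt_swap w 0 (-1)) by (apply ex_RInt_c; auto).
  unfold plus, opp; simpl. ring.
Qed.
Lemma GC_plus f g : GC f -> GC g -> GC (fun t => f t + g t).
Proof. intros Hf Hg x. exact (@continuous_plus R_UniformSpace R_AbsRing R_NormedModule f g x (Hf x) (Hg x)). Qed.
Lemma GC_mult f g : GC f -> GC g -> GC (fun t => f t * g t).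
Proof. intros Hf Hg x. exact (@continuous_mult R_UniformSpace R_AbsRing f g x (Hf x) (Hg x)). Qed.
Lemma GC_const c : GC (fun _ => c).
Proof. intros x. apply continuous_const. Qed.
Lemma GC_id : GC (fun t => t).
Proof. intros x. apply continuous_id. Qed.
Lemma GC_scal c f : GC f -> GC (fun t => c * f t).
Proof. intros H. apply GC_mult; auto. apply GC_const. Qed.
Lemma GC_minus f g : GC f -> GC g -> GC (fun t => f t - g t).
Proof. intros Hf Hg x. apply (continuous_ext (fun t => f t + -1 * g t)).
  intros; simpl; lra. apply GC_plus; auto. apply GC_scal; auto. Qed.

Fixpoint sk (m : nat) (F : nat -> R) : R :=
  match m with O => 0 | S m' => sk m' F + F (S m') end.

Lemma sk_ext m F G : (forall k, (1 <= k <= m)%nat -> F k = G k) -> sk m F = sk m G.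
Proof.
  induction m; simpl; intros H; auto. rewrite IHm, H; [reflexivity|lia|]. intros; apply H; lia.
Qed.

Lemma sk_minus m F G : sk m (fun k => F k - G k) = sk m F - sk m G.
Proof. induction m; simpl; [ring|]. rewrite IHm; ring. Qed.

Lemma sk_abs m F B : (forall k, (1 <= k <= m)%nat -> Rabs (F k) <= B) -> Rabs (sk m F) <= INR m * B.
Proof.
  induction m; cbn [sk]; intros H.
  - rewrite Rabs_R0; simpl; lra.
  - eapply Rle_trans. apply Rabs_triang. rewrite S_INR.
    assert (Rabs (sk m F) <= INR m * B) by (apply IHm; intros; apply H; lia).
    assert (Rabs (F (S m)) <= B) by (apply H; lia). lra.
Qed.

Lemma sk_zero m F : (forall k, (1 <= k <= m)%nat -> F k = 0) -> sk m F = 0.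
Proof. induction m; simpl; intros H; auto. rewrite IHm, H; [ring|lia|]. intros; apply H; lia. Qed.

Lemma sk_delta m F j : (1 <= j <= m)%nat -> (forall k, (1 <= k <= m)%nat -> k <> j -> F k = 0) ->
  sk m F = F j.
Proof.
  induction m; simpl; intros Hj H; [lia|].
  destruct (Nat.eq_dec j (S m)) as [->|N].
  - rewrite sk_zero; [ring|]. intros k Hk. apply H; lia.
  - rewrite IHm; [|lia|intros; apply H; lia]. rewrite (H (S m)); [ring|lia|lia].
Qed.

Lemma sk_GC m (F : nat -> R -> R) : (forall k, GC (F k)) -> GC (fun t => sk m (fun k => F k t)).
Proof.
  intros H. induction m; simpl.
  - apply GC_const.
  - apply GC_plus; auto.
Qed.

Lemma sk_RInt m (F : nat -> R -> R) a b : (forall k, GC (F k)) ->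
  RInt (fun t => sk m (fun k => F k t)) a b = sk m (fun k => RInt (F k) a b).
Proof.
  intros H. induction m; simpl.
  - rewrite RInt_const. unfold scal; simpl; unfold mult; simpl. ring.
  - rewrite RInt_plusR; [rewrite IHm; auto| |]; apply ex_RInt_c; auto. apply sk_GC; auto.
Qed.

Lemma sk_deriv_I m (F : nat -> R -> R) dF x :
  (forall k, (1 <= k <= m)%nat -> deriv_I (F k) x (dF k)) ->
  deriv_I (fun t => sk m (fun k => F k t)) x (sk m dF).
Proof.
  induction m; simpl; intros H.
  - apply deriv_I_zero.
  - apply deriv_I_plus. apply IHm; intros; apply H; lia. apply H; lia.
Qed.

Lemma fin_bound (F : nat -> R -> R) : (forall k, exists B, forall t, Rabs (F k t) <= B) ->
  forall m, exists B, 0 <= B /\ forall k, (k <= m)%nat -> forall t, Rabs (F k t) <= B.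
Proof.
  intros H. induction m.
  - destruct (H 0%nat) as [B HB]. exists (Rmax 0 B). split; [apply Rmax_l|].
    intros k Hk t. replace k with 0%nat by lia. eapply Rle_trans; [apply HB|apply Rmax_r].
  - destruct IHm as [B1 [P1 H1]]. destruct (H (S m)) as [B2 HB].
    exists (Rmax B1 B2). split. eapply Rle_trans; [apply P1|apply Rmax_l].
    intros k Hk t. destruct (Nat.eq_dec k (S m)) as [->|N].
    + eapply Rle_trans; [apply HB|apply Rmax_r].
    + eapply Rle_trans; [apply H1; lia|apply Rmax_l].
Qed.
Section Inv.
Variable phi : R -> R.
Hypothesis Hinc : forall x y, I11 x -> I11 y -> x < y -> phi x < phi y.
Hypothesis Hc : GC phi.
Hypothesis Hm1 : phi (-1) = -1.
Hypothesis Hp1 : phi 1 = 1.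

Lemma phi_I x : I11 x -> I11 (phi x).
Proof using Hinc Hc Hm1 Hp1.
  intros Ix. assert (I1 : I11 (-1)) by (unfold I11; lra). assert (I2 : I11 1) by (unfold I11; lra).
  unfold I11 in *. split.
  - destruct (Req_dec x (-1)) as [->|N]; [lra|]. assert (H := Hinc (-1) x I1 Ix ltac:(lra)); lra.
  - destruct (Req_dec x 1) as [->|N]; [lra|]. assert (H := Hinc x 1 Ix I2 ltac:(lra)); lra.
Qed.

Lemma inv_spec y : I11 y -> I11 (inv_I phi y) /\ phi (inv_I phi y) = y.
Proof using Hinc Hc Hm1 Hp1.
  intros Iy. unfold inv_I. apply epsilon_spec.
  assert (Cp : continuity phi) by (intros x; apply continuous_pt; apply Hc).
  destruct (IVT_gen phi (-1) 1 y Cp) as [x [Hx Ex]].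
  { rewrite Hm1, Hp1. rewrite Rmin_left, Rmax_right by lra. exact Iy. }
  exists x. rewrite Rmin_left, Rmax_right in Hx by lra. split; auto.
Qed.

Lemma phi_inj x y : I11 x -> I11 y -> phi x = phi y -> x = y.
Proof using Hinc Hc Hm1 Hp1.
  intros Ix Iy E. destruct (Rtotal_order x y) as [L|[L|L]]; auto.
  - assert (H := Hinc x y Ix Iy L); lra.
  - assert (H := Hinc y x Iy Ix L); lra.
Qed.

Lemma inv_left x : I11 x -> inv_I phi (phi x) = x.
Proof using Hinc Hc Hm1 Hp1.
  intros Ix. destruct (inv_spec (phi x) (phi_I x Ix)) as [I1 E].
  apply phi_inj; auto.
Qed.

Lemma inv_mono y1 y2 : I11 y1 -> I11 y2 -> y1 < y2 -> inv_I phi y1 < inv_I phi y2.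
Proof using Hinc Hc Hm1 Hp1.
  intros I1 I2 L. destruct (inv_spec y1 I1) as [J1 E1]. destruct (inv_spec y2 I2) as [J2 E2].
  destruct (Rtotal_order (inv_I phi y1) (inv_I phi y2)) as [H|[H|H]]; auto.
  - rewrite H in E1. lra.
  - assert (K := Hinc _ _ J2 J1 H). lra.
Qed.

Lemma inv_cont y0 : I11 y0 -> cont_I (inv_I phi) y0.
Proof using Hinc Hc Hm1 Hp1.
  intros Iy0. apply cont_I_ED. intros e He.
  destruct (inv_spec y0 Iy0) as [Ix0 E0]. set (x0 := inv_I phi y0) in *.
  set (a := Rmax (-1) (x0 - e/2)). set (b := Rmin 1 (x0 + e/2)).
  assert (Ia : I11 a) by (unfold a, I11 in *; unfold Rmax; destruct Rle_dec; lra).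
  assert (Ib : I11 b) by (unfold b, I11 in *; unfold Rmin; destruct Rle_dec; lra).
  assert (ha : a <= x0) by (unfold a, I11 in *; unfold Rmax; destruct Rle_dec; lra).
  assert (hb : x0 <= b) by (unfold b, I11 in *; unfold Rmin; destruct Rle_dec; lra).
  assert (D1 : exists d1, 0 < d1 /\ (a < x0 -> d1 <= y0 - phi a)).
  { destruct (Rlt_dec a x0) as [r|r].
    - exists (y0 - phi a). assert (K := Hinc a x0 Ia Ix0 r). split; lra.
    - exists 1. split; intros; lra. }
  assert (D2 : exists d2, 0 < d2 /\ (x0 < b -> d2 <= phi b - y0)).
  { destruct (Rlt_dec x0 b) as [r|r].
    - exists (phi b - y0). assert (K := Hinc x0 b Ix0 Ib r). split; lra.
    - exists 1. split; intros; lra. }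
  destruct D1 as [d1 [P1 Q1]]. destruct D2 as [d2 [P2 Q2]].
  exists (Rmin d1 d2). split; [apply Rmin_pos; auto|].
  intros y Iy Hy. assert (Hy1 := Rlt_le_trans _ _ _ Hy (Rmin_l _ _)).
  assert (Hy2 := Rlt_le_trans _ _ _ Hy (Rmin_r _ _)).
  destruct (inv_spec y Iy) as [Ix E]. set (x := inv_I phi y) in *.
  assert (xb : x <= b).
  { destruct (Rle_dec x b) as [L|L]; auto. exfalso.
    assert (bx : b < x) by lra.
    assert (b1 : b < 1) by (unfold I11 in Ix; lra).
    assert (beq : b = x0 + e/2) by (unfold b in *; unfold Rmin in *; destruct Rle_dec; lra).
    assert (K := Hinc b x Ib Ix bx).
    assert (Q := Q2 ltac:(lra)).
    unfold Rabs in Hy2; destruct Rcase_abs; lra. }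
  assert (xa : a <= x).
  { destruct (Rle_dec a x) as [L|L]; auto. exfalso.
    assert (ax : x < a) by lra.
    assert (a1 : -1 < a) by (unfold I11 in Ix; lra).
    assert (aeq : a = x0 - e/2) by (unfold a in *; unfold Rmax in *; destruct Rle_dec; lra).
    assert (K := Hinc x a Ix Ia ax).
    assert (Q := Q1 ltac:(lra)).
    unfold Rabs in Hy1; destruct Rcase_abs; lra. }
  assert (a >= x0 - e/2) by (unfold a; unfold Rmax; destruct Rle_dec; lra).
  assert (b <= x0 + e/2) by (unfold b; unfold Rmin; destruct Rle_dec; lra).
  unfold Rabs; destruct Rcase_abs; lra.
Qed.

End Inv.

Lemma cont_I_comp (g u : R -> R) y0 : GC g -> cont_I u y0 -> cont_I (fun t => g (u t)) y0.
Proof.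
  intros Hg Hu. apply cont_I_ED. intros e He.
  destruct (proj1 (continuous_ED g (u y0)) (Hg _) e He) as [d1 [P1 H1]].
  destruct (proj1 (cont_I_ED u y0) Hu d1 P1) as [d [P H]].
  exists d; split; auto.
Qed.
Section Main.
Variable p : nat -> R -> R.
Hypothesis Hsp : special_seq p.

Lemma C1_of k : C1_I (p k). Proof. apply (proj1 Hsp). Qed.

Definition dp (k : nat) : R -> R := proj1_sig (constructive_indefinite_description _ (C1_of k)).
Lemma dp_spec k : (forall x, I11 x -> deriv_I (p k) x (dp k x)) /\ (forall x, I11 x -> cont_I (dp k) x).
Proof. unfold dp. destruct constructive_indefinite_description as [d Hd]. exact Hd. Qed.

Definition P k t := p k (clamp t).
Definition D k t := dp k (clamp t).

Lemma P_GC k : GC (P k).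
Proof. intros x. apply cont_clamp. intros y Iy. eapply deriv_cont. apply dp_spec; auto. Qed.
Lemma D_GC k : GC (D k).
Proof. intros x. apply cont_clamp. apply dp_spec. Qed.

Lemma P_even k t : P k (- t) = P k t.
Proof. unfold P. rewrite clamp_opp. destruct Hsp as (_&_&Hev&_). apply Hev, clamp_I. Qed.

Lemma P_bound k : (0 < k)%nat -> forall t, Rabs (P k t) <= 1/2.
Proof.
  intros Hk t. destruct Hsp as (_&_&_&_&_&Hb&_). destruct (Hb k Hk) as [M [HM H]].
  unfold P. eapply Rle_trans; [apply H, clamp_I|lra].
Qed.

Lemma P_end k : (0 < k)%nat -> P k 1 = 0 /\ P k (-1) = 0.
Proof.
  intros Hk. destruct Hsp as (_&_&_&_&_&_&He). unfold P.
  rewrite !clamp_id by (unfold I11; lra). destruct (He k Hk); split; auto.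
Qed.

Lemma P_deriv k x : I11 x -> deriv_I (P k) x (D k x).
Proof.
  intros Ix. unfold D. rewrite clamp_id by auto. apply (deriv_I_ext (p k)); auto.
  - intros y Iy. unfold P. rewrite clamp_id; auto.
  - apply dp_spec; auto.
Qed.

Lemma P_int k : (0 < k)%nat -> RInt (P k) (-1) 1 = 0.
Proof.
  intros Hk. destruct Hsp as (_&_&_&H0&Ho&_).
  rewrite <- (Ho 0%nat k) by lia. apply RInt_ext. intros x Hx.
  rewrite Rmin_left, Rmax_right in Hx by lra. unfold P. rewrite clamp_id by (unfold I11; lra).
  rewrite H0 by (unfold I11; lra). simpl; lra.
Qed.

Lemma P_orth j k : j <> k -> RInt (fun t => P j t * P k t) (-1) 1 = 0.
Proof.
  intros Hjk. destruct Hsp as (_&_&_&_&Ho&_).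
  rewrite <- (Ho j k) by auto. apply RInt_ext. intros x Hx.
  rewrite Rmin_left, Rmax_right in Hx by lra. unfold P. rewrite clamp_id by (unfold I11; lra). auto.
Qed.

Definition N k := RInt (fun t => P k t * P k t) (-1) 1.

Lemma N_pos k : 0 < N k.
Proof.
  destruct Hsp as (_&Hnz&_). destruct (Hnz k) as [t0 [It0 Nz]].
  set (g := fun t => P k t * P k t).
  assert (Gg : GC g) by (apply GC_mult; apply P_GC).
  assert (g0 : 0 < g t0).
  { unfold g, P. rewrite clamp_id by auto. assert (0 < Rsqr (p k t0)) by (apply Rsqr_pos_lt; auto).
    unfold Rsqr in *; lra. }
  destruct (proj1 (continuous_ED g t0) (Gg t0) (g t0) g0) as [d [Hd Hg]].
  assert (Hpos : forall t, Rabs (t - t0) < d -> 0 < g t).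
  { intros t Ht. assert (K := Hg t Ht). unfold Rabs in K; destruct Rcase_abs; lra. }
  set (u := Rmax (-1) (t0 - d/2)). set (v := Rmin 1 (t0 + d/2)).
  unfold I11 in It0.
  assert (u1 : -1 <= u) by apply Rmax_l. assert (v1 : v <= 1) by apply Rmin_l.
  assert (u2 : u >= t0 - d/2) by (unfold u, Rmax; destruct Rle_dec; lra).
  assert (v2 : v <= t0 + d/2) by (unfold v, Rmin; destruct Rle_dec; lra).
  assert (u3 : u <= t0) by (unfold u, Rmax; destruct Rle_dec; lra).
  assert (v3 : t0 <= v) by (unfold v, Rmin; destruct Rle_dec; lra).
  assert (uv : u < v) by (unfold u, v, Rmax, Rmin; repeat destruct Rle_dec; lra).
  unfold N. fold g.
  rewrite <- (RInt_Chasles g (-1) u 1) by (apply ex_RInt_c; auto).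
  rewrite <- (RInt_Chasles g u v 1) by (apply ex_RInt_c; auto).
  unfold plus; simpl.
  assert (0 <= RInt g (-1) u).
  { apply RInt_ge_0; auto. apply ex_RInt_c; auto. intros; unfold g; nra. }
  assert (0 <= RInt g v 1).
  { apply RInt_ge_0; auto. apply ex_RInt_c; auto. intros; unfold g; nra. }
  assert (0 < RInt g u v).
  { apply RInt_gt_0; auto. intros x Hx. apply Hpos. unfold Rabs; destruct Rcase_abs; lra. }
  lra.
Qed.
Variable n : nat.
Variable Rel : nat -> nat -> Prop.
Variable eps : R.
Hypothesis Htour : tournament n Rel.
Hypothesis Heps : 0 < eps.

Definition c i k := if excluded_middle_informative (Rel i k) then - / N k else 0.

Lemma c_bound : exists C, 0 <= C /\ forall i k, (k <= n)%nat -> Rabs (c i k) <= C.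
Proof.
  destruct (fin_bound (fun k _ => / N k)) with (m := n) as [B [HB H]].
  { intros k. exists (Rabs (/ N k)). intros; lra. }
  exists B. split; auto. intros i k Hk. unfold c. destruct excluded_middle_informative.
  - rewrite Rabs_Ropp. apply (H k Hk 0).
  - rewrite Rabs_R0; auto.
Qed.

Lemma clamp_clamp t : clamp (clamp t) = clamp t.
Proof. apply clamp_id, clamp_I. Qed.

Lemma D_bound : exists B, 0 <= B /\ forall k, (k <= n)%nat -> forall t, Rabs (D k t) <= B.
Proof.
  destruct (fin_bound D) with (m := n) as [B [HB H]].
  - intros k. destruct (continuity_ab_maj (fun t => Rabs (D k t)) (-1) 1) as [Mx [HM _]].
    + lra.
    + intros t _. apply continuous_pt. intros. apply (@continuous_comp R_UniformSpace R_UniformSpace R_UniformSpace (D k) Rabs).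
      apply D_GC. apply continuous_Rabs.
    + exists (Rabs (D k Mx)). intros t. assert (E : D k t = D k (clamp t)) by (unfold D; rewrite clamp_clamp; auto).
      rewrite E. apply HM. apply clamp_I.
  - exists B; auto.
Qed.

Definition Cc := proj1_sig (constructive_indefinite_description _ c_bound).
Lemma Cc_spec : 0 <= Cc /\ forall i k, (k <= n)%nat -> Rabs (c i k) <= Cc.
Proof. unfold Cc. destruct constructive_indefinite_description; auto. Qed.
Definition BDk := proj1_sig (constructive_indefinite_description _ D_bound).
Lemma BDk_spec : 0 <= BDk /\ forall k, (k <= n)%nat -> forall t, Rabs (D k t) <= BDk.
Proof. unfold BDk. destruct constructive_indefinite_description; auto. Qed.

Definition BQ := INR n * Cc.
Definition BD := INR n * (Cc * BDk).
Definition Kd := 1 + 6 * BD + 2 * BQ / eps + 2 * BQ * BD.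
Definition dl := / Kd.

Lemma BQ_pos : 0 <= BQ.
Proof. unfold BQ. apply Rmult_le_pos. apply pos_INR. apply Cc_spec. Qed.
Lemma BD_pos : 0 <= BD.
Proof. unfold BD. apply Rmult_le_pos. apply pos_INR. apply Rmult_le_pos; [apply Cc_spec|apply BDk_spec]. Qed.

Lemma dl_facts : 0 < dl /\ dl * BD < 1/6 /\ dl * BQ < eps /\ dl * (2 * BQ * BD) < 1.
Proof.
  pose proof BQ_pos. pose proof BD_pos.
  assert (Q : 0 <= 2 * BQ / eps) by (apply Rmult_le_pos; [lra|apply Rlt_le, Rinv_0_lt_compat; auto]).
  assert (E : eps * (2 * BQ / eps) = 2 * BQ) by (field; lra).
  assert (K : 0 < Kd) by (unfold Kd; nra).
  assert (Pd : 0 < dl) by (apply Rinv_0_lt_compat; auto).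
  assert (Ed : dl * Kd = 1) by (unfold dl; field; lra).
  unfold Kd in *. set (X := 2 * BQ / eps) in *.
  assert (Ed' : dl + 6 * (dl * BD) + dl * X + dl * (2 * BQ * BD) = 1) by (rewrite <- Ed; ring).
  assert (A1 : 0 <= dl * X) by (apply Rmult_le_pos; lra).
  assert (A2 : 0 <= dl * (2 * BQ * BD)) by (apply Rmult_le_pos; [lra|]; apply Rmult_le_pos; [lra|auto]).
  assert (A3 : 0 <= dl * BD) by (apply Rmult_le_pos; lra).
  assert (A4 : eps * (dl * X) = 2 * (dl * BQ)) by (transitivity (dl * (eps * X)); [ring| rewrite E; ring]).
  repeat split; auto; try lra.
  assert (dl * X < 1) by lra.
  assert (eps * (dl * X) < eps) by (rewrite <- (Rmult_1_r eps) at 2; apply Rmult_lt_compat_l; lra).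
  lra.
Qed.

Definition G i t := RInt (fun s => 1 + P i s) 0 t.
Definition Q i t := sk n (fun k => c i k * P k t).
Definition Qd i t := sk n (fun k => c i k * D k t).
Definition f i t := G i t + dl * Q i t.
Definition fd i t := (1 + P i t) + dl * Qd i t.

Lemma one_P_GC i : GC (fun s => 1 + P i s).
Proof. apply GC_plus. apply GC_const. apply P_GC. Qed.

Lemma G_deriv i x : is_derive (G i) x (1 + P i x).
Proof. apply (is_derive_RInt0 (fun s => 1 + P i s)). apply one_P_GC. Qed.
Lemma G_GC i : GC (G i).
Proof. apply GC_RInt0, one_P_GC. Qed.
Lemma G_odd i t : G i (- t) = - G i t.
Proof. apply RInt0_odd. apply one_P_GC. intros; rewrite P_even; auto. Qed.

Lemma G_end i : (0 < i)%nat -> G i 1 = 1 /\ G i (-1) = -1.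
Proof.
  intros Hi. assert (E := RInt_chasles0 _ (one_P_GC i)). fold (G i 1) (G i (-1)) in E.
  assert (Hm : G i (-1) = - G i 1) by (rewrite <- G_odd; f_equal; lra).
  rewrite RInt_plusR in E by (apply ex_RInt_c; first [apply GC_const|apply P_GC]).
  rewrite P_int in E by auto. rewrite RInt_const in E. rewrite scal_R in E.
  split; lra.
Qed.

Lemma Q_GC i : GC (Q i).
Proof. apply (sk_GC n (fun k t => c i k * P k t)). intros k. apply GC_scal, P_GC. Qed.
Lemma Qd_GC i : GC (Qd i).
Proof. apply (sk_GC n (fun k t => c i k * D k t)). intros k. apply GC_scal, D_GC. Qed.
Lemma f_GC i : GC (f i).
Proof. apply GC_plus. apply G_GC. apply GC_scal, Q_GC. Qed.
Lemma fd_GC i : GC (fd i).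
Proof. apply GC_plus. apply one_P_GC. apply GC_scal, Qd_GC. Qed.

Lemma Q_end i : Q i 1 = 0 /\ Q i (-1) = 0.
Proof.
  unfold Q. split; apply sk_zero; intros k Hk; destruct (P_end k ltac:(lia)) as [E1 E2];
  [rewrite E1|rewrite E2]; ring.
Qed.

Lemma Q_deriv_I i x : I11 x -> deriv_I (Q i) x (Qd i x).
Proof.
  intros Ix. unfold Q, Qd. apply (sk_deriv_I n (fun k t => c i k * P k t) (fun k => c i k * D k x)).
  intros k _. apply deriv_I_scal. apply P_deriv; auto.
Qed.

Lemma f_deriv_I i x : I11 x -> deriv_I (f i) x (fd i x).
Proof.
  intros Ix. unfold f, fd. apply deriv_I_plus.
  - apply is_derive_deriv_I, G_deriv.
  - apply deriv_I_scal, Q_deriv_I; auto.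
Qed.

Lemma Q_is_derive i x : -1 < x < 1 -> is_derive (Q i) x (Qd i x).
Proof. intros Hx. apply deriv_I_is_derive; auto. apply Q_deriv_I. unfold I11; lra. Qed.
Lemma f_is_derive i x : -1 < x < 1 -> is_derive (f i) x (fd i x).
Proof. intros Hx. apply deriv_I_is_derive; auto. apply f_deriv_I. unfold I11; lra. Qed.

Lemma Q_bound i t : Rabs (Q i t) <= BQ.
Proof.
  unfold Q, BQ. apply sk_abs. intros k Hk. rewrite Rabs_mult.
  destruct Cc_spec as [C0 HC]. assert (A := HC i k ltac:(lia)).
  assert (B := P_bound k ltac:(lia) t). pose proof (Rabs_pos (c i k)). pose proof (Rabs_pos (P k t)).
  nra.
Qed.

Lemma Qd_bound i t : Rabs (Qd i t) <= BD.
Proof.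
  unfold Qd, BD. apply sk_abs. intros k Hk. rewrite Rabs_mult.
  destruct Cc_spec as [C0 HC]. assert (A := HC i k ltac:(lia)).
  destruct BDk_spec as [B0 HB]. assert (B := HB k ltac:(lia) t).
  pose proof (Rabs_pos (c i k)). pose proof (Rabs_pos (D k t)).
  apply Rmult_le_compat; auto.
Qed.

Lemma fd_bounds i t : (0 < i)%nat -> 1/3 < fd i t < 3.
Proof.
  intros Hi. unfold fd. assert (A := P_bound i Hi t). assert (B := Qd_bound i t).
  destruct dl_facts as (d0 & d1 & _).
  assert (Rabs (dl * Qd i t) < 1/6).
  { rewrite Rabs_mult, Rabs_right by lra. pose proof (Rabs_pos (Qd i t)). nra. }
  unfold Rabs in *. repeat destruct Rcase_abs; lra.
Qed.

Lemma f_inc i : (0 < i)%nat -> forall x y, I11 x -> I11 y -> x < y -> f i x < f i y.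
Proof.
  intros Hi x y Ix Iy L. destruct (MVT_gen (f i) x y (fd i)) as [cc [Hcc E]].
  - intros z Hz. rewrite Rmin_left, Rmax_right in Hz by lra. apply f_is_derive.
    unfold I11 in *; lra.
  - intros z _. apply continuous_pt, f_GC.
  - assert (B := fd_bounds i cc Hi). nra.
Qed.

Lemma f_end i : (0 < i)%nat -> f i 1 = 1 /\ f i (-1) = -1.
Proof.
  intros Hi. unfold f. destruct (G_end i Hi) as [A B]. destruct (Q_end i) as [C E].
  rewrite A, B, C, E. split; ring.
Qed.

Lemma f_int i : (0 < i)%nat -> RInt (f i) (-1) 1 = 0.
Proof.
  intros Hi. unfold f. rewrite RInt_plusR by (apply ex_RInt_c; first [apply G_GC|apply GC_scal, Q_GC]).
  rewrite RInt_odd by (apply G_GC || apply G_odd).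
  rewrite RInt_scalR by (apply ex_RInt_c, Q_GC).
  unfold Q. rewrite (sk_RInt n (fun k t => c i k * P k t)) by (intros k; apply GC_scal, P_GC).
  rewrite sk_zero. lra.
  intros k Hk. rewrite RInt_scalR by (apply ex_RInt_c, P_GC). rewrite P_int by lia. apply Rmult_0_r.
Qed.
Lemma sk_mulr m F a : sk m F * a = sk m (fun k => F k * a).
Proof. induction m; simpl; [ring|]. rewrite <- IHm. ring. Qed.

Lemma Iki k i : (0 < k)%nat ->
  RInt (fun t => P k t * (1 + P i t)) (-1) 1 = if Nat.eq_dec k i then N i else 0.
Proof.
  intros Hk. rewrite (RInt_ext _ (fun t => P k t + P k t * P i t)) by (intros; rring).
  rewrite RInt_plusR by (apply ex_RInt_c; first [apply P_GC | apply GC_mult; apply P_GC]).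
  rewrite P_int by auto. destruct Nat.eq_dec as [->|Ne].
  - unfold N. lra.
  - rewrite P_orth by auto. lra.
Qed.

Lemma T1 i j : RInt (fun s => G j s * (1 + P i s)) (-1) 1 = 0.
Proof.
  apply RInt_odd. apply GC_mult. apply G_GC. apply one_P_GC.
  intros x. rewrite G_odd, P_even. ring.
Qed.

Lemma T2 i j : (0 < j)%nat ->
  RInt (fun s => (1 + P j s) * Q i s + G j s * Qd i s) (-1) 1 = 0.
Proof.
  intros Hj. rewrite (FTC (fun s => G j s * Q i s)).
  - destruct (G_end j Hj) as [A B]. destruct (Q_end i) as [C E]. rewrite C, E. rring.
  - lra.
  - intros x _. apply GC_mult. apply G_GC. apply Q_GC.
  - intros x Hx. apply (is_derive_mult (G j) (Q i)). apply G_deriv. apply Q_is_derive; auto.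
    intros; apply Rmult_comm.
  - apply GC_plus; apply GC_mult; (apply one_P_GC || apply Q_GC || apply G_GC || apply Qd_GC).
Qed.

Lemma T3 i j : (1 <= i <= n)%nat -> (1 <= j <= n)%nat ->
  RInt (fun s => Q j s * (1 + P i s) - (1 + P j s) * Q i s) (-1) 1 = c j i * N i - c i j * N j.
Proof.
  intros Hi Hj.
  rewrite (RInt_ext _ (fun s => sk n (fun k => c j k * (P k s * (1 + P i s)) - c i k * (P k s * (1 + P j s))))).
  2:{ intros x _. unfold Q. rewrite sk_minus. rewrite sk_mulr.
      rewrite (Rmult_comm (1 + P j x)), sk_mulr. f_equal; apply sk_ext; intros; ring. }
  rewrite (sk_RInt n (fun k s => c j k * (P k s * (1 + P i s)) - c i k * (P k s * (1 + P j s)))).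
  2:{ intros k. apply GC_minus; apply GC_scal; apply GC_mult; (apply P_GC || apply one_P_GC). }
  rewrite (sk_ext n _ (fun k => c j k * (if Nat.eq_dec k i then N i else 0) - c i k * (if Nat.eq_dec k j then N j else 0))).
  2:{ intros k Hk. rewrite RInt_minusR. rewrite !RInt_scalR by (apply ex_RInt_c; apply GC_mult; (apply P_GC || apply one_P_GC)).
      rewrite !Iki by lia. reflexivity.
      apply ex_RInt_c; apply GC_scal; apply GC_mult; (apply P_GC || apply one_P_GC).
      apply ex_RInt_c; apply GC_scal; apply GC_mult; (apply P_GC || apply one_P_GC). }
  rewrite sk_minus. rewrite (sk_delta n _ i), (sk_delta n _ j); auto.
  - destruct Nat.eq_dec; [|congruence]. destruct Nat.eq_dec; [|congruence]. reflexivity.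
  - intros k _ Nk. destruct Nat.eq_dec; [congruence|ring].
  - intros k _ Nk. destruct Nat.eq_dec; [congruence|ring].
Qed.

Lemma T4 i j : Rabs (RInt (fun s => Q j s * Qd i s) (-1) 1) <= 2 * (BQ * BD).
Proof.
  replace 2 with (1 - -1) by ring. apply abs_RInt_le_const. lra.
  apply ex_RInt_c, GC_mult; [apply Q_GC|apply Qd_GC].
  intros t _. rewrite Rabs_mult. apply Rmult_le_compat; try apply Rabs_pos. apply Q_bound. apply Qd_bound.
Qed.

Definition Aij i j := RInt (fun s => f j s * fd i s) (-1) 1.

Lemma A_formula i j : (1 <= i <= n)%nat -> (1 <= j <= n)%nat ->
  Aij i j = dl * (c j i * N i - c i j * N j) + dl * dl * RInt (fun s => Q j s * Qd i s) (-1) 1.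
Proof.
  intros Hi Hj. unfold Aij.
  rewrite (RInt_ext _ (fun s => (G j s * (1 + P i s) + dl * ((1 + P j s) * Q i s + G j s * Qd i s))
     + (dl * (Q j s * (1 + P i s) - (1 + P j s) * Q i s) + (dl * dl) * (Q j s * Qd i s)))).
  2:{ intros x _. unfold f, fd. rring. }
  assert (g1 : GC (fun s => G j s * (1 + P i s))) by (apply GC_mult; [apply G_GC|apply one_P_GC]).
  assert (g2 : GC (fun s => (1 + P j s) * Q i s + G j s * Qd i s)).
  { apply GC_plus; apply GC_mult; (apply one_P_GC || apply Q_GC || apply G_GC || apply Qd_GC). }
  assert (g3 : GC (fun s => Q j s * (1 + P i s) - (1 + P j s) * Q i s)).
  { apply GC_minus; apply GC_mult; (apply one_P_GC || apply Q_GC). }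
  assert (g4 : GC (fun s => Q j s * Qd i s)) by (apply GC_mult; [apply Q_GC|apply Qd_GC]).
  rewrite RInt_plusR.
  2:{ apply ex_RInt_c. apply GC_plus; auto. apply GC_scal; auto. }
  2:{ apply ex_RInt_c. apply GC_plus; apply GC_scal; auto. }
  rewrite RInt_plusR by (apply ex_RInt_c; auto; apply GC_scal; auto).
  rewrite (RInt_plusR (fun s => dl * _)) by (apply ex_RInt_c; auto; apply GC_scal; auto).
  rewrite !RInt_scalR by (apply ex_RInt_c; auto).
  rewrite T1, T2, T3 by lia. lra.
Qed.

Lemma cN_rel j k : Rel j k -> c j k * N k = -1.
Proof.
  intros H. unfold c. destruct excluded_middle_informative; [|tauto].
  assert (K := N_pos k). field. lra.
Qed.
Lemma cN_norel j k : ~ Rel j k -> c j k * N k = 0.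
Proof. intros H. unfold c. destruct excluded_middle_informative; [tauto|ring]. Qed.

Lemma A_sign i j : in_n n i -> in_n n j -> i <> j -> (0 < Aij i j <-> Rel i j).
Proof.
  intros Hi Hj Nij. unfold in_n in *. rewrite A_formula by auto.
  assert (B := T4 i j). set (T := RInt (fun s => Q j s * Qd i s) (-1) 1) in *.
  destruct dl_facts as (d0 & _ & _ & d3).
  assert (Bd : Rabs (dl * dl * T) < dl).
  { rewrite !Rabs_mult, Rabs_right by lra. pose proof (Rabs_pos T).
    assert (dl * Rabs T <= dl * (2 * (BQ * BD))) by (apply Rmult_le_compat_l; lra).
    assert (dl * (dl * Rabs T) < dl * 1). apply Rmult_lt_compat_l; auto. nra. nra. }
  destruct Htour as (_ & _ & Ht). destruct (Ht i j Hi Hj Nij) as [[R1|R1] R2].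
  - assert (Hn : ~ Rel j i) by tauto. rewrite (cN_rel i j R1), (cN_norel j i Hn). split; auto; intros _.
    unfold Rabs in Bd; destruct Rcase_abs; nra.
  - assert (Hn : ~ Rel i j) by tauto. rewrite (cN_rel j i R1), (cN_norel i j Hn). split; [|tauto]. intros Hp.
    exfalso. unfold Rabs in Bd; destruct Rcase_abs; nra.
Qed.
Lemma GC_cont_I (h : R -> R) x : GC h -> cont_I h x.
Proof.
  intros H. apply cont_I_ED. intros e He.
  destruct (proj1 (continuous_ED h x) (H x) e He) as [d [Hd H']].
  exists d; split; auto.
Qed.

Lemma f_in_G i : (0 < i)%nat -> in_G (f i).
Proof.
  intros Hi. destruct (f_end i Hi) as [E1 E2]. refine (conj _ (conj _ (conj _ (conj _ _)))).
  - intros x Ix. apply (phi_I (f i) (f_inc i Hi) (f_GC i) E2 E1 x Ix).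
  - apply f_inc; auto.
  - intros x _. apply GC_cont_I, f_GC.
  - auto.
  - auto.
Qed.

Definition hh i j := fun t => f j (inv_I (f i) t).

Lemma hh_cont i j : (0 < i)%nat -> forall y, I11 y -> cont_I (hh i j) y.
Proof.
  intros Hi y Iy. destruct (f_end i Hi) as [E1 E2]. unfold hh.
  apply cont_I_comp. apply f_GC. apply (inv_cont (f i) (f_inc i Hi) (f_GC i) E2 E1 y Iy).
Qed.

Lemma hh_RInt i j : (0 < i)%nat -> RInt (hh i j) (-1) 1 = Aij i j.
Proof.
  intros Hi. destruct (f_end i Hi) as [E1 E2].
  set (H := fun t => hh i j (clamp t)).
  assert (GH : GC H) by (intros x; apply cont_clamp, hh_cont; auto).
  assert (Ehh : RInt (hh i j) (-1) 1 = RInt H (-1) 1).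
  { apply RInt_ext. intros x Hx. rewrite Rmin_left, Rmax_right in Hx by lra.
    unfold H. rewrite clamp_id; auto. unfold I11; lra. }
  rewrite Ehh. unfold Aij.
  rewrite (FTC (fun s => RInt H (-1) (f i s)) (fun s => f j s * fd i s) (-1) 1).
  - rewrite E1, E2, RInt_point. unfold zero; simpl. lra.
  - lra.
  - intros x _. apply (@continuous_comp R_UniformSpace R_UniformSpace R_UniformSpace (f i) (fun y => RInt H (-1) y)).
    apply f_GC. apply GC_RInt0; auto.
  - intros x Hx.
    assert (D := is_derive_comp (fun y => RInt H (-1) y) (f i) x _ _ (is_derive_RInt0 H (-1) (f i x) GH) (f_is_derive i x Hx)).
    assert (EH : H (f i x) = f j x).
    { unfold H, hh. assert (Ix : I11 x) by (unfold I11; lra).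
      rewrite clamp_id by (apply (phi_I (f i) (f_inc i Hi) (f_GC i) E2 E1 x Ix)).
      rewrite (inv_left (f i) (f_inc i Hi) (f_GC i) E2 E1 x Ix); reflexivity. }
    rewrite EH, scal_R in D. rewrite Rmult_comm. exact D.
  - apply GC_mult; [apply f_GC|apply fd_GC].
Qed.

Lemma hh_in_G i j : (0 < i)%nat -> (0 < j)%nat -> in_G (hh i j).
Proof.
  intros Hi Hj. destruct (f_end i Hi) as [E1 E2]. destruct (f_end j Hj) as [F1 F2].
  assert (Hinc := f_inc i Hi). assert (Hc := f_GC i).
  assert (Hinv := inv_spec (f i) Hinc Hc E2 E1).
  unfold hh. refine (conj _ (conj _ (conj _ (conj _ _)))).
  - intros x Ix. apply (phi_I (f j) (f_inc j Hj) (f_GC j) F2 F1). apply Hinv; auto.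
  - intros x y Ix Iy L. apply f_inc; auto; try apply Hinv; auto.
    apply (inv_mono (f i) Hinc Hc E2 E1); auto.
  - intros x Ix. apply hh_cont; auto.
  - assert (K := inv_left (f i) Hinc Hc E2 E1 (-1) ltac:(unfold I11; lra)). rewrite E2 in K.
    rewrite K; auto.
  - assert (K := inv_left (f i) Hinc Hc E2 E1 1 ltac:(unfold I11; lra)). rewrite E1 in K.
    rewrite K; auto.
Qed.

Lemma main :
  let g := fun (i : nat) (t : R) => RInt (fun s => 1 + p i s) 0 t in
  exists f : nat -> R -> R,
    (forall i, in_n n i -> in_G0 (f i)) /\
    (forall i, in_n n i ->
       exists M, M < eps /\ forall t, I11 t -> Rabs (f i t - g i t) <= M) /\
    (forall i, in_n n i -> forall t, I11 t ->
       exists l, deriv_I (f i) t l /\ 1/3 < l < 3) /\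
    (forall i j, in_n n i -> in_n n j -> i <> j ->
       (in_Gplus (fun t => f j (inv_I (f i) t)) <-> Rel i j)).
Proof.
  intros g. exists f. unfold in_n. split; [|split; [|split]].
  - intros i Hi. split; [apply f_in_G; lia| apply f_int; lia].
  - intros i Hi. exists (dl * BQ). destruct dl_facts as (d0 & _ & d2 & _). split; auto.
    intros t It. unfold f, g.
    assert (EG : G i t = RInt (fun s => 1 + p i s) 0 t).
    { apply RInt_ext. intros x Hx. unfold P. rewrite clamp_id; auto.
      unfold I11 in *. unfold Rmin, Rmax in Hx; destruct Rle_dec; lra. }
    rewrite EG. replace (RInt (fun s => 1 + p i s) 0 t + dl * Q i t - RInt (fun s => 1 + p i s) 0 t)
      with (dl * Q i t) by ring.
    rewrite Rabs_mult, Rabs_right by lra. apply Rmult_le_compat_l; [lra|]. apply Q_bound.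
  - intros i Hi t It. exists (fd i t). split. apply f_deriv_I; auto. apply fd_bounds; lia.
  - intros i j Hi Hj Nij. split.
    + intros [HG Hpos]. fold (hh i j) in Hpos. rewrite hh_RInt in Hpos by lia.
      apply A_sign; unfold in_n; auto.
    + intros HR. split.
      * apply hh_in_G; lia.
      * fold (hh i j). rewrite hh_RInt by lia. apply A_sign; unfold in_n; auto.
Qed.

End Main.

Theorem theorem7p2 (p : nat -> R -> R) (n : nat) (Rel : nat -> nat -> Prop) (eps : R) :
  special_seq p -> tournament n Rel -> 0 < eps ->
  let g := fun (i : nat) (t : R) => RInt (fun s => 1 + p i s) 0 t in
  exists f : nat -> R -> R,
    (forall i, in_n n i -> in_G0 (f i)) /\
    (forall i, in_n n i ->
       exists M, M < eps /\ forall t, I11 t -> Rabs (f i t - g i t) <= M) /\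
    (forall i, in_n n i -> forall t, I11 t ->
       exists l, deriv_I (f i) t l /\ 1/3 < l < 3) /\
    (forall i j, in_n n i -> in_n n j -> i <> j ->
       (in_Gplus (fun t => f j (inv_I (f i) t)) <-> Rel i j)).
Proof.
  intros Hsp Ht He. exact (main p Hsp n Rel eps Ht He).
Qed.
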